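(* Let $\sigma,\tau,\bar\sigma,\bar\tau$ satisfy the Standing Hypothesis. Let $m,n,m',n'$ be positive integers with $m+n=m'+n'$, and let $x,x'$ be non-negative integers with $x,x'\le\min\{m,n,m',n'\}+1$. Then $$K_{m,n}(x)-K_{m',n'}(x)=K_{m,n}(x')-K_{m',n'}(x').$$
   Context: Skew diagrams: for partitions $\mu\subseteq\lambda$, the skew diagram $\lambda/\mu$ is the set of boxes $(i,j)$ with $\mu_i<j\le\lambda_i$; skew diagrams are identified up to deleting empty rows or columns. $s_{\lambda/\mu}=\sum_T x^{c(T)}$ over semistandard Young tableaux of shape $\lambda/\mu$. Overlap notation: for $\alpha=(\alpha_1,\dots,\alpha_L)$ with $\alpha_i\ge1$ and $\beta=(\beta_1,\dots,\beta_{L-1})$ with $0\le\beta_i\le\min\{\alpha_i,\alpha_{i+1}\}$, $(\alpha\,|\,\beta)$ is the skew diagram $\lambda/\mu$ with $L$ nonempty rows, $\lambda_i-\mu_i=\alpha_i$ and $\lambda_{i+1}-\mu_i=\beta_i$; $\{\alpha\,|\,\beta\}$ is its skew Schur function. Commas denote concatenation; $a^j$ is $j$ copies of $a$. Standing Hypothesis: $\sigma=(\sigma_1,\dots,\sigma_s)$, $\tau=(\tau_1,\dots,\tau_t)$ compositions, $s,t\ge0$; $\bar\sigma,\bar\tau$ sequences of non-negative integers of lengths $s,t$; $\bar\sigma_s=1$ if $s>0$; $\bar\tau_1=1$ if $t>0$; $\bar\sigma_i\le\min\{\sigma_i,\sigma_{i+1}\}$ ($1\le i<s$), $\bar\tau_i\le\min\{\tau_i,\tau_{i-1}\}$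 ($1<i\le t$). $\sigma\backslash\sigma_s$ removes the last part of $\sigma$, $\tau\backslash\tau_1$ removes the first part of $\tau$, similarly for $\bar\sigma,\bar\tau$. Definition of $K$: for integers $m,n\ge1$ and $0\le x\le\min\{m,n\}+1$, $$K_{m,n}(x)=\begin{cases}\{\sigma,m,n,\tau\,|\,\bar\sigma,x,\bar\tau\}&x\le m,\ x\le n;\\ -\{\sigma\backslash\sigma_s,m+\sigma_s,n,\tau\,|\,\bar\sigma\backslash\bar\sigma_s,x,\bar\tau\}&x=m+1,\ x\le n;\\ -\{\sigma,m,n+\tau_1,\tau\backslash\tau_1\,|\,\bar\sigma,x,\bar\tau\backslash\bar\tau_1\}&x\le m,\ x=n+1;\\ \{\sigma\backslash\sigma_s,m+\sigma_s,n+\tau_1,\tau\backslash\tau_1\,|\,\bar\sigma\backslash\bar\sigma_s,x,\bar\tau\backslash\bar\tau_1\}&x=m+1,\ x=n+1,\end{cases}$$ where any term containing $\sigma\backslash\sigma_s$ is set to $0$ if $s=0$, and any term containing $\tau\backslash\tau_1$ is set to $0$ if $t=0$. *)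

(* Defs.v *)
From HB Require Import structures.
From mathcomp Require Import all_boot all_order all_algebra.
Set Implicit Arguments. Unset Strict Implicit. Unset Printing Implicit Defensive.
Import GRing.Theory.
Local Open Scope ring_scope.

(* Skew diagram in overlap notation (alpha | beta), rows numbered 0..L-1 from
   top to bottom (English convention).  [starts a b] gives the starting column
   (0-based) of each row: the bottom row starts in column 0, and
   start_i = start_{i+1} + a_{i+1} - b_i, so that row i occupies columns
   [start_i, start_i + a_i) and rows i, i+1 share exactly b_i columns. *)
Fixpoint starts (a b : seq nat) : seq nat :=
  match a with
  | [::] => [::]
  | _ :: a' =>
      match a' with
      | [::] => [:: 0%N]
      | a2 :: _ =>
          let r := starts a' (behead b) in
          (head 0%N r + a2 - head 0%N b)%N :: r
      end
  end.

(* a generous bound on the number of columns *)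
Definition width (a b : seq nat) : nat := (sumn (starts a b) + sumn a)%N.

Definition in_diag (a b : seq nat) (p : 'I_(size a) * 'I_(width a b)) : bool :=
  let st := nth 0%N (starts a b) p.1 in
  (st <= p.2 < st + nth 0%N a p.1)%N.

Arguments in_diag : clear implicits.
Definition box (a b : seq nat) : finType :=
  {p : 'I_(size a) * 'I_(width a b) | in_diag a b p}.

Definition brow a b (u : box a b) : nat := (val u).1.
Definition bcol a b (u : box a b) : nat := (val u).2.

(* semistandard: weakly increasing along rows, strictly increasing down columns;
   entries in 'I_N stand for 1..N *)
Definition is_ssyt (a b : seq nat) (N : nat) (T : {ffun box a b -> 'I_N}) : bool :=
  [forall u : box a b, forall v : box a b,
     ((brow u == brow v) && (bcol u < bcol v)%N ==> (T u <= T v)%N) &&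
     ((bcol u == bcol v) && (brow u < brow v)%N ==> (T u < T v)%N)].

Definition skew_schur (R : comPzRingType) (N : nat) (xv : 'I_N -> R)
    (a b : seq nat) : R :=
  \sum_(T : {ffun box a b -> 'I_N} | is_ssyt T) \prod_(u : box a b) xv (T u).

(* Standing Hypothesis (0-based indices) *)
Definition standing_hyp (sg ta sgb tab : seq nat) : Prop :=
  [/\ all (fun k => 0 < k)%N sg, all (fun k => 0 < k)%N ta,
      size sgb = size sg, size tab = size ta &
      [/\ (0 < size sg)%N -> last 0%N sgb = 1%N,
          (0 < size ta)%N -> head 0%N tab = 1%N,
          forall i, (i.+1 < size sg)%N ->
             (nth 0%N sgb i <= minn (nth 0%N sg i) (nth 0%N sg i.+1))%N &
          forall i, (0 < i < size ta)%N ->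
             (nth 0%N tab i <= minn (nth 0%N ta i) (nth 0%N ta i.-1))%N]].

(* K_{m,n}(x); outside the domain 0 <= x <= min(m,n)+1 it is set to 0
   (never used there). *)
Definition Kfun (R : comPzRingType) (N : nat) (xv : 'I_N -> R)
    (sg ta sgb tab : seq nat) (m n x : nat) : R :=
  let s := size sg in let t := size ta in
  let sgi := take s.-1 sg in let sgs := last 0%N sg in
  let sgbi := take s.-1 sgb in
  let ta1 := head 0%N ta in let tat := behead ta in let tabt := behead tab in
  if (x <= m)%N && (x <= n)%N then
    skew_schur xv (sg ++ [:: m; n] ++ ta) (sgb ++ [:: x] ++ tab)
  else if (x == m.+1) && (x <= n)%N then
    (if s == 0%N then 0 else
     - skew_schur xv (sgi ++ [:: (m + sgs)%N; n] ++ ta) (sgbi ++ [:: x] ++ tab))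
  else if (x <= m)%N && (x == n.+1) then
    (if t == 0%N then 0 else
     - skew_schur xv (sg ++ [:: m; (n + ta1)%N] ++ tat) (sgb ++ [:: x] ++ tabt))
  else if (x == m.+1) && (x == n.+1) then
    (if (s == 0%N) || (t == 0%N) then 0 else
     skew_schur xv (sgi ++ [:: (m + sgs)%N; (n + ta1)%N] ++ tat)
                   (sgbi ++ [:: x] ++ tabt))
  else 0.

(* Main.v *)
Require Import Defs.
From HB Require Import structures.
From mathcomp Require Import all_boot all_order all_algebra.
From Stdlib Require Import Lia.
Import GRing.Theory.
Local Open Scope ring_scope.
Set Implicit Arguments. Unset Strict Implicit. Unset Printing Implicit Defensive.

Ltac ssrlia := intros; repeat match goal with
 | H : is_true (_ <= _)%N |- _ => move/leP: H => H
 | H : is_true (_ < _)%N |- _ => move/ltP: H => H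
 | H : is_true (_ == _ :> nat) |- _ => move/eqP: H => H
 | H : is_true (~~ (_ <= _)%N) |- _ => rewrite -ltnNge in H
 | H : is_true (~~ (_ < _)%N) |- _ => rewrite -leqNgt in H
 | H : is_true (~~ (_ == _ :> nat)) |- _ => move/eqP: H => H
 | H : (_ <= _)%N = false |- _ => move/negbT: H => H
 | H : (_ < _)%N = false |- _ => move/negbT: H => H
 | H : (_ == _ :> nat) = false |- _ => move/negbT: H => H
 | H : is_true (_ && _) |- _ => move/andP: H => [? ?]
 | |- is_true (_ && _) => apply/andP; split
 | |- is_true (_ <= _)%N => apply/leP
 | |- is_true (_ < _)%N => apply/ltP
 | |- is_true (_ == _ :> nat) => apply/eqP
 | |- is_true (~~ (_ == _ :> nat)) => apply/eqP
 end; unfold addn, subn, muln, addn_rec, subn_rec, muln_rec in *; try (change predn with Nat.pred in * ); lia.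


Section RowSums.
Variables (R : comPzRingType) (N : nat) (xv : 'I_N -> R).

Definition ent (r : seq 'I_N) (j : nat) : nat := nth 0%N (map val r) j.
Definition incr (r : seq 'I_N) : bool :=
  all (fun j => ent r j <= ent r j.+1)%N (iota 0 (size r).-1).
Definition wt (r : seq 'I_N) : R := \prod_(i <- r) xv i.
Definition compat (c : nat) (r r' : seq 'I_N) : bool :=
  all (fun j => ent r j < ent r' (size r' - c + j))%N (iota 0 c).
Definition rows (k : nat) : seq (seq 'I_N) := [seq tval t | t <- enum {: k.-tuple 'I_N}].
Fixpoint RS (a b : seq nat) (P : pred (seq 'I_N)) : R :=
  match a with
  | [::] => 1
  | a0 :: a' => \sum_(r <- rows a0 | incr r && P r)
                   wt r * RS a' (behead b) (compat (head 0%N b) r)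
  end.
Definition hh (k : nat) : R := RS [:: k] [::] predT.

Lemma mem_rows k r : (r \in rows k) = (size r == k).
Proof.
apply/mapP/eqP => [[t _ ->]|H]; first exact: size_tuple.
have H' : size r == k by apply/eqP.
by exists (Tuple H'); rewrite ?mem_enum.
Qed.

Lemma uniq_rows k : uniq (rows k).
Proof. rewrite map_inj_uniq ?enum_uniq //; exact: val_inj. Qed.

Lemma ent_cat r1 r2 j : ent (r1 ++ r2) j = if (j < size r1)%N then ent r1 j else ent r2 (j - size r1).
Proof. by rewrite /ent map_cat nth_cat size_map. Qed.
Lemma ent_take k r j : (j < k)%N -> ent (take k r) j = ent r j.
Proof. by move=> H; rewrite /ent map_take nth_take. Qed.
Lemma ent_drop k r j : ent (drop k r) j = ent r (k + j).
Proof. by rewrite /ent map_drop nth_drop. Qed.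

Lemma incrP r : reflect (forall j, (j.+1 < size r)%N -> (ent r j <= ent r j.+1)%N) (incr r).
Proof.
apply: (iffP allP) => H j.
  move=> Hj; apply: H; rewrite mem_iota; ssrlia.
rewrite mem_iota => /andP [_ Hj]; apply: H; ssrlia.
Qed.

Lemma incr_mono r j k : incr r -> (j <= k)%N -> (k < size r)%N -> (ent r j <= ent r k)%N.
Proof.
move=> /incrP H; elim: k => [|k IH]; first by rewrite leqn0 => /eqP ->.
rewrite leq_eqVlt => /orP [/eqP -> //|Hjk Hk].
apply: leq_trans (IH _ _) (H _ Hk) => //; ssrlia.
Qed.

Lemma incr_take k r : incr r -> incr (take k r).
Proof.
move=> Hr; apply/incrP => j; rewrite size_take => Hj.
rewrite !ent_take; try (case: ifP Hj => ? ?; ssrlia).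
apply: incr_mono Hr _ _ => //. case: ifP Hj => ? ?; ssrlia.
Qed.

Lemma incr_drop k r : incr r -> incr (drop k r).
Proof.
move=> Hr; apply/incrP => j; rewrite size_drop => Hj.
rewrite !ent_drop; apply: incr_mono Hr _ _; ssrlia.
Qed.

Lemma incr_cat r1 r2 : incr r1 -> incr r2 ->
  ((0 < size r1)%N -> (0 < size r2)%N -> ent r1 (size r1).-1 <= ent r2 0)%N ->
  incr (r1 ++ r2).
Proof.
move=> H1 H2 H12; apply/incrP => j; rewrite size_cat => Hj; rewrite !ent_cat.
case: (ltnP j.+1 (size r1)) => Hj1.
  by rewrite (ltnW Hj1); apply: incr_mono H1 _ _.
case: (ltnP j (size r1)) => Hj0.
  have -> : j = (size r1).-1 by ssrlia.
  have -> : ((size r1).-1.+1 - size r1 = 0)%N by ssrlia.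
  apply: H12; ssrlia.
have -> : (j.+1 - size r1 = (j - size r1).+1)%N by ssrlia.
apply: incr_mono H2 _ _ => //; ssrlia.
Qed.

Lemma wt_cat r1 r2 : wt (r1 ++ r2) = wt r1 * wt r2.
Proof. by rewrite /wt big_cat. Qed.

End RowSums.

From HB Require Import structures.
From mathcomp Require Import all_boot all_order all_algebra.
From Stdlib Require Import Lia.
Import GRing.Theory.
Local Open Scope ring_scope.
Set Implicit Arguments. Unset Strict Implicit. Unset Printing Implicit Defensive.

Lemma big_bij (T : Type) (idx : T) (op : Monoid.com_law idx) (I J : eqType)
  (s : seq I) (t : seq J) (P : pred I) (Q : pred J) (f : I -> T) (g : J -> T)
  (h : I -> J) (h' : J -> I) :
  uniq s -> uniq t ->
  (forall i, i \in s -> P i -> [/\ h i \in t, Q (h i), h' (h i) = i & g (h i) = f i]) ->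
  (forall j, j \in t -> Q j -> [/\ h' j \in s, P (h' j) & h (h' j) = j]) ->
  \big[op/idx]_(i <- s | P i) f i = \big[op/idx]_(j <- t | Q j) g j.
Proof.
move=> Us Ut H1 H2; rewrite -big_filter -[RHS]big_filter.
have E : perm_eq [seq h i | i <- filter P s] (filter Q t).
  apply: uniq_perm.
  - rewrite map_inj_in_uniq ?filter_uniq // => i1 i2.
    rewrite !mem_filter => /andP [P1 S1] /andP [P2 S2] E.
    by case: (H1 _ S1 P1) => _ _ <- _; case: (H1 _ S2 P2) => _ _ <- _; rewrite E.
  - exact: filter_uniq.
  move=> j; apply/mapP/idP => [[i]|].
    rewrite mem_filter => /andP [Pi Si] ->.
    by case: (H1 _ Si Pi) => ? ? _ _; rewrite mem_filter; apply/andP.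
  rewrite mem_filter => /andP [Qj Tj]; case: (H2 _ Tj Qj) => ? ? E.
  by exists (h' j); rewrite // mem_filter; apply/andP.
rewrite -(perm_big _ E) big_map; apply: eq_big_seq => i.
by rewrite mem_filter => /andP [Pi Si]; case: (H1 _ Si Pi).
Qed.

Lemma find_iota_lt (p : pred nat) y : has p (iota 0 y) -> (find p (iota 0 y) < y)%N.
Proof. by rewrite has_find size_iota. Qed.
Lemma find_iota_p (p : pred nat) y : has p (iota 0 y) -> p (find p (iota 0 y)).
Proof. move=> H; have := nth_find 0%N H; by rewrite nth_iota ?find_iota_lt. Qed.
Lemma find_iota_before (p : pred nat) y j : (j < find p (iota 0 y))%N -> ~~ p j.
Proof.
move=> H; have := before_find 0%N H; rewrite nth_iota ?add0n => [->//|].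
apply: leq_trans H _; by rewrite -[X in (_ <= X)%N](size_iota 0 y) find_size.
Qed.
Lemma find_iota_eq (p : pred nat) y i : (i < y)%N -> p i ->
  (forall j, (j < i)%N -> ~~ p j) -> find p (iota 0 y) = i.
Proof.
move=> Hi Pi Hb.
have Hh : has p (iota 0 y) by apply/hasP; exists i => //; rewrite mem_iota.
case: (ltngtP (find p (iota 0 y)) i) => // H.
  by have := Hb _ H; rewrite find_iota_p.
by have := find_iota_before H; rewrite Pi.
Qed.

Section JT.
Variables (R : comPzRingType) (N : nat) (xv : 'I_N -> R).
Local Notation RS := (RS xv).
Local Notation wt := (wt xv).
Local Notation hh := (hh xv).

Lemma eq_RS a0 a' b P P' : (forall r, size r = a0 -> P r = P' r) ->
  RS (a0 :: a') b P = RS (a0 :: a') b P'.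
Proof.
move=> H /=; rewrite -!(big_filter (rows N a0)); congr (\big[_/_]_(i <- _) _).
apply: eq_in_filter => r; rewrite mem_rows => /eqP Hr; by rewrite H.
Qed.

Lemma eq_RS_gen a b P P' : (forall r, size r = head 0%N a -> P r = P' r) -> RS a b P = RS a b P'.
Proof. by case: a => [//|a0 a'] /= H; apply: eq_RS. Qed.

Lemma compat_prefix c (r1 r2 r' : seq 'I_N) : (forall j, (j < c)%N -> ent r1 j = ent r2 j) ->
  compat c r1 r' = compat c r2 r'.
Proof. move=> H; apply: eq_in_all => j; rewrite mem_iota add0n => /andP [_ Hj]; by rewrite H. Qed.

Lemma compat_drop c k (r r' : seq 'I_N) : (k + c <= size r')%N -> compat c r (drop k r') = compat c r r'.
Proof.
move=> H; apply: eq_in_all => j _ /=; rewrite ent_drop size_drop.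
by have -> : (k + (size r' - k - c + j) = size r' - c + j)%N by ssrlia.
Qed.

Lemma sum_pairs (I J : eqType) (s : seq I) (t : seq J) (P : I -> J -> bool) (F : I -> J -> R) :
  \sum_(i <- s) \sum_(j <- t | P i j) F i j =
  \sum_(p <- [seq (i, j) | i <- s, j <- t] | P p.1 p.2) F p.1 p.2.
Proof.
rewrite [RHS]big_mkcond big_allpairs; apply: eq_bigr => i _; by rewrite [LHS]big_mkcond.
Qed.

End JT.

From HB Require Import structures.
From mathcomp Require Import all_boot all_order all_algebra.
From Stdlib Require Import Lia.
Import GRing.Theory.
Local Open Scope ring_scope.
Set Implicit Arguments. Unset Strict Implicit. Unset Printing Implicit Defensive.

Section TC.
Variables (N : nat).
Implicit Types (A B : seq 'I_N).

Lemma ent_tc k B i A j : (k <= size B)%N ->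
  ent (take k B ++ drop i A) j = if (j < k)%N then ent B j else ent A (i + (j - k)).
Proof.
move=> H; rewrite ent_cat size_takel //; case: ifP => Hj; first by rewrite ent_take.
by rewrite ent_drop.
Qed.

Lemma size_tc k B i A : (k <= size B)%N -> size (take k B ++ drop i A) = (k + (size A - i))%N.
Proof. by move=> H; rewrite size_cat size_takel // size_drop. Qed.

Lemma incr_tc k B i A : (k <= size B)%N -> incr B -> incr A ->
  ((0 < k)%N -> (i < size A)%N -> (ent B k.-1 <= ent A i)%N) -> incr (take k B ++ drop i A).
Proof.
move=> Hk HB HA Hj; apply: incr_cat; [exact: incr_take|exact: incr_drop|].
rewrite size_takel // size_drop => H1 H2; rewrite ent_take ?ent_drop ?addn0; last ssrlia.
apply: Hj; ssrlia.
Qed.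

Lemma drop_tc d k B i A : (k <= size B)%N -> (k <= d)%N ->
  drop d (take k B ++ drop i A) = drop (d - k + i) A.
Proof. by move=> H1 H2; rewrite drop_cat size_takel // ltnNge H2 /= drop_drop. Qed.

Lemma take_tc k B s : (k <= size B)%N -> take k (take k B ++ s) = take k B.
Proof. by move=> H; rewrite take_cat size_takel // ltnn subnn take0 cats0. Qed.

Lemma drop_tc0 k B s : (k <= size B)%N -> drop k (take k B ++ s) = s.
Proof. by move=> H; rewrite drop_cat size_takel // ltnn subnn drop0. Qed.

End TC.

Lemma wt_swap (R : comPzRingType) (N : nat) (xv : 'I_N -> R) (A B : seq 'I_N) k i :
  wt xv (take k B ++ drop i A) * wt xv (take i A ++ drop k B) = wt xv A * wt xv B.
Proof.
rewrite -{3}(cat_take_drop i A) -{3}(cat_take_drop k B) !wt_cat.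
by rewrite mulrACA [RHS]mulrACA (mulrC (wt xv (take i A))).
Qed.

Section Bij.
Variables (R : comPzRingType) (N m n x : nat) (xv : 'I_N -> R).
Hypotheses (Hx : (0 < x)%N) (Hxm : (x <= m)%N) (Hxn : (x <= n)%N).
Implicit Types (A B C D : seq 'I_N).

Definition fp A B j := (ent B (n - x + j) <= ent A j)%N.
Definition fI A B := find (fp A B) (iota 0 x).
Definition gp C D j := (j == x.-1) || (ent C (n - x + j) <= ent D j)%N.
Definition gI C D := find (gp C D) (iota 0 x).
Definition toCD (p : seq 'I_N * seq 'I_N) :=
  (take (n - x + fI p.1 p.2).+1 p.2 ++ drop (fI p.1 p.2) p.1,
   take (fI p.1 p.2) p.1 ++ drop (n - x + fI p.1 p.2).+1 p.2).
Definition toAB (q : seq 'I_N * seq 'I_N) :=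
  (take (gI q.1 q.2) q.2 ++ drop (n - x + gI q.1 q.2).+1 q.1,
   take (n - x + gI q.1 q.2).+1 q.1 ++ drop (gI q.1 q.2) q.2).

Lemma ncompat A B : size B = n -> ~~ compat x A B = has (fp A B) (iota 0 x).
Proof.
move=> HB; rewrite /compat -has_predC; apply: eq_has => j /=.
by rewrite /fp HB -leqNgt.
Qed.

Lemma L1 A B : size A = m -> size B = n -> incr A -> incr B -> has (fp A B) (iota 0 x) ->
  let C := (toCD (A, B)).1 in let D := (toCD (A, B)).2 in
  [/\ size C = (m + n - x).+1, size D = x.-1, incr C, incr D &
   [/\ drop n C = drop x.-1 A, toAB (C, D) = (A, B),
       (forall j, (j < (n - x).+1)%N -> ent C j = ent B j) &
       wt xv C * wt xv D = wt xv A * wt xv B]].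
Proof.
move: (Hx) (Hxm) (Hxn) => Hx0 Hxm0 Hxn0.
move=> SA SB IA IB Hh C D; rewrite /C /D /toCD /= {C D}.
set i := fI A B.
have Hi : (i < x)%N by apply: find_iota_lt.
have Pi : fp A B i by apply: find_iota_p.
have Bi : forall j, (j < i)%N -> (ent A j < ent B (n - x + j))%N.
  by move=> j Hj; have := find_iota_before Hj; rewrite /fp -ltnNge.
have HkB : ((n - x + i).+1 <= size B)%N by rewrite SB; ssrlia.
have HiA : (i <= size A)%N by rewrite SA; ssrlia.
have HgI : gI (take (n - x + i).+1 B ++ drop i A) (take i A ++ drop (n - x + i).+1 B) = i.
  apply: find_iota_eq => // [|j Hj].
    rewrite /gp; case: eqP => //= Hne.
    rewrite ent_tc // ent_tc // ltnn.
    have -> : (n - x + i < (n - x + i).+1)%N by [].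
    rewrite subnn addn0; apply: incr_mono IB _ _ => //; rewrite SB; ssrlia.
  rewrite /gp negb_or; apply/andP; split; first by apply/eqP; ssrlia.
  rewrite ent_tc // ent_tc // Hj.
  have -> : (n - x + j < (n - x + i).+1)%N by ssrlia.
  by rewrite -ltnNge Bi.
split.
- rewrite size_tc // SA; ssrlia.
- rewrite size_tc // SB; ssrlia.
- by apply: incr_tc => // _ _.
- apply: incr_tc => // Hi0 Hk.
  have h1 : (ent A i.-1 < ent B (n - x + i.-1))%N by apply: Bi; ssrlia.
  have h2 : (ent B (n - x + i.-1) <= ent B (n - x + i).+1)%N.
    apply: incr_mono IB _ _ => //; ssrlia.
  exact: ltnW (leq_trans h1 h2).
split.
- rewrite drop_tc //; last ssrlia.
  by have -> : (n - (n - x + i).+1 + i = x.-1)%N by ssrlia.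
- rewrite /toAB /= HgI take_tc // drop_tc0 // take_tc // drop_tc0 //.
  by rewrite !cat_take_drop.
- move=> j Hj; rewrite ent_tc //.
  by have -> : (j < (n - x + i).+1)%N by ssrlia.
- exact: wt_swap.
Qed.

Lemma L2 C D : size C = (m + n - x).+1 -> size D = x.-1 -> incr C -> incr D ->
  let A := (toAB (C, D)).1 in let B := (toAB (C, D)).2 in
  [/\ size A = m, size B = n, incr A, incr B &
   [/\ drop x.-1 A = drop n C, has (fp A B) (iota 0 x), toCD (A, B) = (C, D) &
       (forall j, (j < (n - x).+1)%N -> ent B j = ent C j)]].
Proof.
move: (Hx) (Hxm) (Hxn) => Hx0 Hxm0 Hxn0.
move=> SC SD IC ID A B; rewrite /A /B /toAB /= {A B}.
set i := gI C D.
have Hh : has (gp C D) (iota 0 x).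
  apply/hasP; exists x.-1; first by rewrite mem_iota; ssrlia.
  by rewrite /gp eqxx.
have Hi : (i < x)%N by apply: find_iota_lt.
have Pi : gp C D i by apply: find_iota_p.
have Bi : forall j, (j < i)%N -> (ent D j < ent C (n - x + j))%N.
  move=> j Hj; have := find_iota_before Hj; rewrite /gp negb_or => /andP [_].
  by rewrite -ltnNge.
have HkC : ((n - x + i).+1 <= size C)%N by rewrite SC; ssrlia.
have HiD : (i <= size D)%N by rewrite SD; ssrlia.
have HfI : fI (take i D ++ drop (n - x + i).+1 C) (take (n - x + i).+1 C ++ drop i D) = i.
  apply: find_iota_eq => // [|j Hj].
    rewrite /fp ent_tc // ent_tc // ltnn subnn addn0.
    have -> : (n - x + i < (n - x + i).+1)%N by [].
    apply: incr_mono IC _ _ => //; rewrite SC; ssrlia.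
  rewrite /fp ent_tc // ent_tc // Hj.
  have -> : (n - x + j < (n - x + i).+1)%N by ssrlia.
  by rewrite -ltnNge Bi.
split.
- rewrite size_tc // SC; ssrlia.
- rewrite size_tc // SD; ssrlia.
- apply: incr_tc => // Hi0 Hk.
  have h1 : (ent D i.-1 < ent C (n - x + i.-1))%N by apply: Bi; ssrlia.
  have h2 : (ent C (n - x + i.-1) <= ent C (n - x + i).+1)%N.
    apply: incr_mono IC _ _ => //; ssrlia.
  exact: ltnW (leq_trans h1 h2).
- apply: incr_tc => // _ Hk.
  move: Pi; rewrite /gp; case: eqP => [E|_ //]; rewrite SD in Hk; ssrlia.
split.
- rewrite drop_tc //; last ssrlia.
  by have -> : (x.-1 - i + (n - x + i).+1 = n)%N by ssrlia.
- by move: HfI; rewrite /fI has_find size_iota => ->.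
- rewrite /toCD /= HfI take_tc // drop_tc0 // take_tc // drop_tc0 //.
  by rewrite !cat_take_drop.
- move=> j Hj; rewrite ent_tc //.
  by have -> : (j < (n - x + i).+1)%N by ssrlia.
Qed.

End Bij.

From HB Require Import structures.
From mathcomp Require Import all_boot all_order all_algebra.
From Stdlib Require Import Lia.
Import GRing.Theory.
Local Open Scope ring_scope.
Set Implicit Arguments. Unset Strict Implicit. Unset Printing Implicit Defensive.

Lemma mem_pairs (I J : eqType) (s : seq I) (t : seq J) (p : I * J) :
  (p \in [seq (i, j) | i <- s, j <- t]) = (p.1 \in s) && (p.2 \in t).
Proof.
apply/allpairsP/andP => [[q [H1 H2 ->]]|[H1 H2]]; first by split.
by exists p; split => //; case: p {H1 H2}.
Qed.

Lemma uniq_pairs (I J : eqType) (s : seq I) (t : seq J) :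
  uniq s -> uniq t -> uniq [seq (i, j) | i <- s, j <- t].
Proof. move=> Us Ut; apply: allpairs_uniq => // [[a b] [c d]] _ _ //. Qed.

Arguments toCD : simpl never.
Arguments toAB : simpl never.

Section JT0.
Variables (R : comPzRingType) (N : nat) (xv : 'I_N -> R).
Local Notation RS := (RS xv).
Local Notation wt := (wt xv).
Local Notation hh := (hh xv).

Lemma sum_pairs2 (I J : eqType) (s : seq I) (t : seq J) (P : pred I) (Q : I -> J -> bool)
  (F : I -> J -> R) :
  \sum_(i <- s | P i) \sum_(j <- t | Q i j) F i j =
  \sum_(p <- [seq (i, j) | i <- s, j <- t] | P p.1 && Q p.1 p.2) F p.1 p.2.
Proof.
rewrite -(sum_pairs s t (fun i j => P i && Q i j)) big_mkcond; apply: eq_bigr => i _.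
by case: (P i) => //=; rewrite big_pred0.
Qed.

Lemma JT0 (m n x : nat) (beta bb : seq nat) (Q : pred (seq 'I_N)) :
  (0 < x)%N -> (x <= m)%N -> (x <= n)%N ->
  (beta != [::] -> (head 0%N bb <= (n - x).+1)%N) ->
  RS (m :: n :: beta) (x :: bb) (fun r => Q (drop x.-1 r)) =
  RS [:: m] [::] (fun r => Q (drop x.-1 r)) * RS (n :: beta) bb predT
  - hh x.-1 * RS ((m + n - x).+1 :: beta) bb (fun r => Q (drop n r)).
Proof.
move=> Hx Hxm Hxn Hbb.
have HG : forall B C, (forall j, (j < (n - x).+1)%N -> ent B j = ent C j) ->
  RS beta (behead bb) (compat (head 0%N bb) B) = RS beta (behead bb) (compat (head 0%N bb) C).
  move=> B C HBC; case: beta Hbb => [//|b0 beta'] Hbb.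
  apply: eq_RS => r _; apply: compat_prefix => j Hj; apply: HBC.
  by apply: leq_trans Hj (Hbb _).
rewrite /hh /=.
set F := fun B => wt B * RS beta (behead bb) (compat (head 0%N bb) B).
set PA := fun A => incr A && Q (drop x.-1 A).
set Bad := \sum_(A <- rows N m | PA A) wt A * \sum_(B <- rows N n | incr B && ~~ compat x A B) F B.
have E1 : (\sum_(A <- rows N m | PA A) wt A * 1) * \sum_(B <- rows N n | incr B && true) F B =
   \sum_(A <- rows N m | PA A) wt A * \sum_(B <- rows N n | incr B && compat x A B) F B + Bad.
  rewrite mulr_suml -big_split /=; apply: eq_bigr => A _.
  rewrite mulr1 -mulrDr (bigID (compat x A)) /=; congr (_ * (_ + _)); apply: eq_bigl => B; by rewrite andbT.
rewrite E1 -addrA.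
set H2 := (\sum_(r <- rows N x.-1 | _) _) * _.
suff -> : Bad - H2 = 0 by rewrite addr0.
apply/eqP; rewrite subr_eq0; apply/eqP.
rewrite /Bad /H2 mulrC mulr_suml.
under eq_bigr => A _ do rewrite mulr_sumr.
under [RHS]eq_bigr => C _ do rewrite mulr_sumr.
rewrite !sum_pairs2.
apply: (big_bij _ _ (h := toCD n x) (h' := toAB n x)).
- by apply: uniq_pairs; apply: uniq_rows.
- by apply: uniq_pairs; apply: uniq_rows.
- move=> [A B]; rewrite mem_pairs !mem_rows /= => /andP [/eqP SA /eqP SB].
  rewrite /PA => /andP [/andP [IA QA] /andP [IB Hc]].
  rewrite (@ncompat N n x A B SB) in Hc.
  have [SC SD IC ID [Hdr Hab Hpre Hwt]] := @L1 R N m n x xv Hx Hxm Hxn A B SA SB IA IB Hc.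
  rewrite /toCD /= in SC SD IC ID Hdr Hab Hpre Hwt *.
  split => //.
  + by rewrite mem_pairs !mem_rows /= SC SD !eqxx.
  + by rewrite IC ID Hdr QA.
  + rewrite /F mulr1 mulrAC Hwt -mulrA (HG _ B) // => j Hj; exact: Hpre.
- move=> [C D]; rewrite mem_pairs !mem_rows /= => /andP [/eqP SC /eqP SD].
  move=> /andP [/andP [IC QC] /andP [ID _]].
  have [SA SB IA IB [Hdr Hh Hcd Hpre]] := @L2 N m n x Hx Hxm Hxn C D SC SD IC ID.
  rewrite /toAB /= in SA SB IA IB Hdr Hh Hcd Hpre *.
  split => //.
  + by rewrite mem_pairs !mem_rows /= SA SB !eqxx.
  + by rewrite /PA IA IB Hdr QC (@ncompat N n x _ _ SB) Hh.
Qed.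

End JT0.

From HB Require Import structures.
From mathcomp Require Import all_boot all_order all_algebra.
From Stdlib Require Import Lia.
Import GRing.Theory.
Local Open Scope ring_scope.
Set Implicit Arguments. Unset Strict Implicit. Unset Printing Implicit Defensive.

Section JTgen.
Variables (R : comPzRingType) (N : nat) (xv : 'I_N -> R).
Arguments RS : simpl never.
Local Notation RS := (RS xv).
Local Notation wt := (wt xv).
Local Notation hh := (hh xv).

Lemma RS_cons a0 a' b P : RS (a0 :: a') b P =
  \sum_(r <- rows N a0 | incr r && P r) wt r * RS a' (behead b) (compat (head 0%N b) r).
Proof. by []. Qed.

Lemma sum_JT (I : Type) (s : seq I) (P : pred I) (w X Z : I -> R) (Y h : R) :
  \sum_(i <- s | P i) w i * (X i * Y - h * Z i) =
  (\sum_(i <- s | P i) w i * X i) * Y - h * \sum_(i <- s | P i) w i * Z i.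
Proof.
rewrite mulr_suml mulr_sumr -sumrB; apply: eq_bigr => i _.
by rewrite mulrBr !mulrA [w i * h]mulrC.
Qed.

Lemma JT1 (alpha abar : seq nat) (m n x : nat) (beta bb : seq nat) :
  size abar = size alpha ->
  (0 < x)%N -> (x <= m)%N -> (x <= n)%N ->
  (beta != [::] -> (head 0%N bb <= (n - x).+1)%N) ->
  forall a0 c0 (P : pred (seq 'I_N)), (last c0 abar <= (m - x).+1)%N ->
  RS (a0 :: alpha ++ m :: n :: beta) (c0 :: abar ++ x :: bb) P =
  RS (a0 :: alpha ++ [:: m]) (c0 :: abar) P * RS (n :: beta) bb predT
  - hh x.-1 * RS (a0 :: alpha ++ (m + n - x).+1 :: beta) (c0 :: abar ++ bb) P.
Proof.
move=> Hs Hx Hxm Hxn Hbb.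
elim: alpha abar Hs => [|a1 alpha IH] [|c1 abar] //= Hs a0 c0 P Hl.
  rewrite !(RS_cons a0) /= -sum_JT; apply: eq_bigr => r _; congr (_ * _).
  have -> : RS [:: m, n & beta] (x :: bb) (compat c0 r) =
            RS [:: m, n & beta] (x :: bb) (fun A => compat c0 r (drop x.-1 A)).
    apply: eq_RS => A SA; rewrite compat_drop // SA; ssrlia.
  rewrite JT0 //; congr (_ * _ - _ * _).
    apply: eq_RS => A SA; rewrite compat_drop // SA; ssrlia.
  apply: eq_RS => A SA; rewrite compat_drop // SA; ssrlia.
rewrite !(RS_cons a0) /= -sum_JT; apply: eq_bigr => r _; congr (_ * _).
case: Hs => Hs; exact: IH.
Qed.

Lemma RS_nil b P : RS [::] b P = 1.
Proof. by []. Qed.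

Lemma Fact0 (m n : nat) (beta bb : seq nat) (P : pred (seq 'I_N)) :
  RS (m :: n :: beta) (0%N :: bb) P = RS [:: m] [::] P * RS (n :: beta) bb predT.
Proof.
rewrite !(RS_cons m) /= mulr_suml; apply: eq_bigr => A _.
rewrite RS_nil mulr1; congr (_ * _); exact: eq_RS.
Qed.

Lemma Fact1 (alpha abar : seq nat) (m n : nat) (beta bb : seq nat) :
  size abar = size alpha ->
  forall a0 c0 (P : pred (seq 'I_N)),
  RS (a0 :: alpha ++ m :: n :: beta) (c0 :: abar ++ 0%N :: bb) P =
  RS (a0 :: alpha ++ [:: m]) (c0 :: abar) P * RS (n :: beta) bb predT.
Proof.
elim: alpha abar => [|a1 alpha IH] [|c1 abar] //= Hs a0 c0 P;
  rewrite !(RS_cons a0) /= mulr_suml; apply: eq_bigr => r _; rewrite -mulrA; congr (_ * _).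
  exact: Fact0.
case: Hs => Hs; exact: IH.
Qed.

Lemma JT_T (alpha abar : seq nat) (m n x : nat) (beta bb : seq nat) :
  size abar = size alpha ->
  (0 < x)%N -> (x <= m)%N -> (x <= n)%N ->
  (beta != [::] -> (head 0%N bb <= (n - x).+1)%N) ->
  (alpha != [::] -> (last 0%N abar <= (m - x).+1)%N) ->
  RS (alpha ++ m :: n :: beta) (abar ++ x :: bb) predT =
  RS (alpha ++ [:: m]) abar predT * RS (n :: beta) bb predT
  - hh x.-1 * RS (alpha ++ (m + n - x).+1 :: beta) (abar ++ bb) predT.
Proof.
move=> Hs Hx Hxm Hxn Hbb Hl.
case: alpha abar Hs Hl => [|a0 alpha]; case => [|c0 abar] //= Hs Hl.
  have := JT0 xv predT Hx Hxm Hxn Hbb; rewrite /=; exact.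
case: Hs => Hs; apply: JT1 => //; exact: Hl.
Qed.

Lemma Fact_T (alpha abar : seq nat) (m n : nat) (beta bb : seq nat) :
  size abar = size alpha ->
  RS (alpha ++ m :: n :: beta) (abar ++ 0%N :: bb) predT =
  RS (alpha ++ [:: m]) abar predT * RS (n :: beta) bb predT.
Proof.
case: alpha abar => [|a0 alpha]; case => [|c0 abar] //= Hs; first exact: Fact0.
case: Hs => Hs; exact: Fact1.
Qed.

End JTgen.

From HB Require Import structures.
From mathcomp Require Import all_boot all_order all_algebra.
From Stdlib Require Import Lia.
Import GRing.Theory.
Local Open Scope ring_scope.
Set Implicit Arguments. Unset Strict Implicit. Unset Printing Implicit Defensive.

Fixpoint valid (a b : seq nat) : bool :=
  match a with
  | a0 :: ((a1 :: _) as a') => (head 0%N b <= minn a0 a1)%N && valid a' (behead b)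
  | _ => true
  end.

Lemma valid_cons2' a0 a1 a' b :
  valid [:: a0, a1 & a'] b = (head 0%N b <= minn a0 a1)%N && valid (a1 :: a') (behead b).
Proof. by []. Qed.

Lemma validP' a b : reflect (forall i, (i.+1 < size a)%N ->
   (nth 0%N b i <= minn (nth 0%N a i) (nth 0%N a i.+1))%N) (valid a b).
Proof.
elim: a b => [|a0 a' IH] b; first by constructor.
case: a' IH => [|a1 a'] IH; first by constructor => i.
rewrite valid_cons2'; apply: (iffP andP) => [[H1 /IH H2] [|i] Hi|H].
- by move: H1; case: b {H2} => [|b0 b].
- by have := H2 i Hi; case: b {H1 H2}.
split; first by have := H 0%N isT; case: b {H}.
apply/IH => i Hi; have := H i.+1 Hi; by case: b {H} => [|b0 b] /=; rewrite ?nth_nil.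
Qed.

Lemma size_starts a b : size (starts a b) = size a.
Proof.
elim: a b => [|a0 a' IH] b //=; case: a' IH => [|a1 a'] IH //= .
by rewrite IH.
Qed.

Lemma starts_rec a b i : (i.+1 < size a)%N ->
  nth 0%N (starts a b) i = (nth 0%N (starts a b) i.+1 + nth 0%N a i.+1 - nth 0%N b i)%N.
Proof.
elim: a b i => [|a0 a' IH] b i //=; case: a' IH => [|a1 a'] IH //=.
case: i => [|i] Hi /=; first by rewrite nth0.
by rewrite IH // nth_behead.
Qed.

Lemma nth_sumn (s : seq nat) i : (nth 0%N s i <= sumn s)%N.
Proof.
elim: s i => [|x s IH] [|i] //=; first exact: leq_addr.
apply: leq_trans (IH i) _; exact: leq_addl.
Qed.

Section Starts.
Variables (a b : seq nat).
Hypothesis Hv : valid a b.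
Local Notation st i := (nth 0%N (starts a b) i).
Local Notation aa i := (nth 0%N a i).
Local Notation bb i := (nth 0%N b i).

Lemma vb1 i : (i.+1 < size a)%N -> (bb i <= aa i)%N.
Proof. by move=> H; move/validP': Hv => /(_ i H); rewrite leq_min => /andP []. Qed.
Lemma vb2 i : (i.+1 < size a)%N -> (bb i <= aa i.+1)%N.
Proof. by move=> H; move/validP': Hv => /(_ i H); rewrite leq_min => /andP []. Qed.

Lemma st_step i : (i.+1 < size a)%N -> (st i + bb i = st i.+1 + aa i.+1)%N.
Proof. move=> H; have := vb2 H; rewrite (starts_rec b H); ssrlia. Qed.

Lemma st_mono i k : (i <= k)%N -> (k < size a)%N -> (st k <= st i)%N.
Proof.
move=> Hik Hk; elim: k Hik Hk => [|k IH]; first by rewrite leqn0 => /eqP ->.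
rewrite leq_eqVlt => /orP [/eqP -> //|Hik] Hk.
have := st_step Hk; have := vb2 Hk; have := IH Hik (ltnW Hk); ssrlia.
Qed.

Lemma end_mono i k : (i <= k)%N -> (k < size a)%N -> (st k + aa k <= st i + aa i)%N.
Proof.
move=> Hik Hk; elim: k Hik Hk => [|k IH]; first by rewrite leqn0 => /eqP ->.
rewrite leq_eqVlt => /orP [/eqP -> //|Hik] Hk.
have := st_step Hk; have := vb1 Hk; have := IH Hik (ltnW Hk); ssrlia.
Qed.

Lemma st_width i : (i < size a)%N -> (st i + aa i <= width a b)%N.
Proof. move=> _; rewrite /width; apply: leq_add; exact: nth_sumn. Qed.

End Starts.

Section Conv.
Variables (R : comPzRingType) (N : nat) (xv : 'I_N -> R).

Fixpoint rowlists (a : seq nat) : seq (seq (seq 'I_N)) :=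
  if a is a0 :: a' then [seq r :: Rs | r <- rows N a0, Rs <- rowlists a'] else [:: [::]].

Lemma mem_rowlists a Rs : (Rs \in rowlists a) = (map size Rs == a).
Proof.
elim: a Rs => [|a0 a' IH] Rs.
  by case: Rs.
apply/allpairsP/idP => [[[r Rs'] [/= H1 H2 ->]]|].
  by move: H1 H2; rewrite mem_rows IH /= => /eqP -> /eqP ->.
case: Rs => [//|r Rs'] /= /eqP [Hr HRs]; exists (r, Rs'); split => //=.
  by rewrite mem_rows Hr.
by rewrite IH HRs.
Qed.

Lemma uniq_rowlists a : uniq (rowlists a).
Proof.
elim: a => [|a0 a' IH] //=; apply: allpairs_uniq => //; first exact: uniq_rows.
by move=> [r1 R1] [r2 R2] _ _ /= [-> ->].
Qed.

Fixpoint vrf (b : seq nat) (Rs : seq (seq 'I_N)) : bool :=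
  match Rs with
  | [::] => true
  | r :: Rs' => [&& incr r, (if Rs' is r' :: _ then compat (head 0%N b) r r' else true)
                 & vrf (behead b) Rs']
  end.

Definition wtR (Rs : seq (seq 'I_N)) : R := \prod_(r <- Rs) wt xv r.

Lemma RS_flat a b P : RS xv a b P =
  \sum_(Rs <- rowlists a | vrf b Rs && (if Rs is r :: _ then P r else true)) wtR Rs.
Proof.
elim: a b P => [|a0 a' IH] b P.
  by rewrite /= big_cons big_nil /= addr0 /wtR big_nil.
rewrite RS_cons [RHS]big_mkcond /= big_allpairs_dep [LHS]big_mkcond.
apply: eq_bigr => r _; rewrite IH.
case: (boolP (incr r && P r)) => [/andP [Ir Pr]|H].
  rewrite mulr_sumr [LHS]big_mkcond; apply: eq_bigr => Rs' _ /=.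
  have E : incr r = true := Ir; have E2 : P r = true := Pr.
  by rewrite E E2 andbT /= andbC /wtR big_cons.
rewrite big1 // => Rs' _ /=.
by move: H; rewrite negb_and; case/orP => /negbTE E; rewrite /= ?E ?andbF.
Qed.

End Conv.

Section Box.
Variables (a b : seq nat).
Local Notation st i := (nth 0%N (starts a b) i).
Local Notation aa i := (nth 0%N a i).

Definition mkbox (i c : nat) : option (box a b) :=
  if (insub i : option 'I_(size a)) is Some i' then
    if (insub c : option 'I_(width a b)) is Some c' then insub (i', c') else None
  else None.

Lemma mkboxE (u : box a b) : mkbox (brow u) (bcol u) = Some u.
Proof. by case: u => [[i c] H]; rewrite /mkbox /brow /bcol /= !valK (insubT _ H). Qed.

Lemma box_range (u : box a b) :
  [/\ (brow u < size a)%N, (st (brow u) <= bcol u)%N & (bcol u < st (brow u) + aa (brow u))%N].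
Proof.
case: u => [[i c] H]; rewrite /brow /bcol /=; move: H; rewrite /in_diag /= => /andP [H1 H2].
by split.
Qed.

Lemma mkbox_some i c : (i < size a)%N -> (st i <= c)%N -> (c < st i + aa i)%N ->
  exists u : box a b, [/\ mkbox i c = Some u, brow u = i & bcol u = c].
Proof.
move=> Hi H1 H2.
have Hc : (c < width a b)%N := leq_trans H2 (st_width b Hi).
have Hd : in_diag a b (Ordinal Hi, Ordinal Hc) by rewrite /in_diag /= H1 H2.
exists (exist (fun p => in_diag a b p) _ Hd); split => //; exact: (mkboxE (exist (fun p => in_diag a b p) _ Hd)).
Qed.

Lemma brow_bcol_inj (u v : box a b) : brow u = brow v -> bcol u = bcol v -> u = v.
Proof. by move=> E1 E2; have := mkboxE u; rewrite E1 E2 mkboxE => [[]]. Qed.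

End Box.

Section Conv2.
Variables (R : comPzRingType) (N : nat) (xv : 'I_N -> R) (d : 'I_N) (a b : seq nat).
Hypothesis Hv : valid a b.
Local Notation st i := (nth 0%N (starts a b) i).
Local Notation aa i := (nth 0%N a i).
Local Notation bb i := (nth 0%N b i).
Local Notation bx := (box a b).

Definition val_at (T : {ffun bx -> 'I_N}) i c : 'I_N := odflt d (omap T (mkbox a b i c)).

Lemma val_atE T (u : bx) : val_at T (brow u) (bcol u) = T u.
Proof. by rewrite /val_at mkboxE. Qed.

Definition rho (T : {ffun bx -> 'I_N}) : seq (seq 'I_N) :=
  [seq [seq val_at T i c | c <- iota (st i) (aa i)] | i <- iota 0 (size a)].
Definition build (Rs : seq (seq 'I_N)) : {ffun bx -> 'I_N} :=
  [ffun u => nth d (nth [::] Rs (brow u)) (bcol u - st (brow u))].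

Lemma size_rho T : size (rho T) = size a.
Proof. by rewrite size_map size_iota. Qed.

Lemma nth_rho T i : (i < size a)%N ->
  nth [::] (rho T) i = [seq val_at T i c | c <- iota (st i) (aa i)].
Proof. by move=> Hi; rewrite (nth_map 0%N) ?size_iota // nth_iota. Qed.

Lemma map_size_rho T : map size (rho T) = a.
Proof.
apply: (@eq_from_nth _ 0%N); first by rewrite size_map size_rho.
move=> i; rewrite size_map size_rho => Hi.
by rewrite (nth_map [::]) ?size_rho // nth_rho // size_map size_iota.
Qed.

Lemma ent_rho T i j : (i < size a)%N -> (j < aa i)%N ->
  ent (nth [::] (rho T) i) j = val (val_at T i (st i + j)).
Proof.
move=> Hi Hj; rewrite /ent nth_rho // -map_comp (nth_map 0%N) ?size_iota //.
by rewrite nth_iota.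
Qed.

Lemma ent_nth (r : seq 'I_N) j : (j < size r)%N -> ent r j = val (nth d r j).
Proof. by move=> Hj; rewrite /ent (nth_map d). Qed.

Lemma build_rho T : build (rho T) = T.
Proof.
apply/ffunP => u; rewrite ffunE; have [Hi H1 H2] := box_range u.
rewrite nth_rho // (nth_map 0%N) ?size_iota; last ssrlia.
by rewrite nth_iota ?subnKC ?val_atE //; ssrlia.
Qed.

Lemma rho_build Rs : map size Rs = a -> rho (build Rs) = Rs.
Proof.
move=> HRs; have Hs : size Rs = size a by rewrite -HRs size_map.
apply: (@eq_from_nth _ [::]); first by rewrite size_rho Hs.
move=> i; rewrite size_rho => Hi.
have Hsi : size (nth [::] Rs i) = aa i by rewrite -HRs (nth_map [::]) ?Hs.
rewrite nth_rho //; apply: (@eq_from_nth _ d); first by rewrite size_map size_iota Hsi.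
move=> j; rewrite size_map size_iota => Hj.
rewrite (nth_map 0%N) ?size_iota // nth_iota //.
have Hc : (st i + j < st i + aa i)%N by rewrite ltn_add2l.
have [u [Eu Ru Cu]] := @mkbox_some a b i (st i + j) Hi (leq_addr _ _) Hc.
by rewrite /val_at Eu /= ffunE Ru Cu addKn.
Qed.

Lemma vrfP (c : seq nat) (Rs : seq (seq 'I_N)) : reflect
  ((forall i, (i < size Rs)%N -> incr (nth [::] Rs i)) /\
   (forall i, (i.+1 < size Rs)%N -> compat (nth 0%N c i) (nth [::] Rs i) (nth [::] Rs i.+1)))
  (vrf c Rs).
Proof.
elim: Rs c => [|r Rs IH] c /=; first by constructor; split.
apply: (iffP and3P) => [[Ir Hc /IH [H1 H2]]|[H1 H2]].
  split => [[|i] Hi //|[|i] Hi /=]; first exact: H1.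
    by case: Rs {IH H1 H2} Hc Hi => [//|r' Rs] /=; rewrite nth0.
  by rewrite -nth_behead; apply: H2.
split; first exact: (H1 0%N).
  by case: Rs {IH H1} H2 => [//|r' Rs] H2; rewrite -nth0; apply: (H2 0%N).
apply/IH; split => [i Hi|i Hi]; first exact: (H1 i.+1).
by rewrite nth_behead; apply: (H2 i.+1).
Qed.

Lemma ssyt_vrf T : is_ssyt T -> vrf b (rho T).
Proof.
move=> Hs; apply/vrfP; rewrite size_rho; split => [i Hi|i Hi].
- apply/incrP => j Hj.
  have Hj' : (j.+1 < aa i)%N by move: Hj; rewrite nth_rho // size_map size_iota.
  rewrite !ent_rho //; try ssrlia.
  have Hc1 : (st i + j < st i + aa i)%N by ssrlia.
  have Hc2 : (st i + j.+1 < st i + aa i)%N by ssrlia.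
  have [u [Eu Ru Cu]] := @mkbox_some a b i (st i + j) Hi (leq_addr _ _) Hc1.
  have [v [Ev Rv Cv]] := @mkbox_some a b i (st i + j.+1) Hi (leq_addr _ _) Hc2.
  rewrite /val_at Eu Ev /=.
  move/forallP: Hs => /(_ u) /forallP /(_ v) /andP [Hr _].
  move/implyP: Hr; apply; rewrite Ru Rv Cu Cv eqxx /=; ssrlia.
- have Hb1 := vb1 Hv Hi; have Hb2 := vb2 Hv Hi; have Hst := st_step Hv Hi.
  have Hi0 : (i < size a)%N by ssrlia.
  apply/allP => j; rewrite mem_iota add0n => /andP [_ Hj].
  have Hsz : size (nth [::] (rho T) i.+1) = aa i.+1 by rewrite nth_rho // size_map size_iota.
  rewrite Hsz !ent_rho //; try ssrlia.
  have -> : (st i.+1 + (aa i.+1 - bb i + j) = st i + j)%N by ssrlia.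
  have Hc1 : (st i + j < st i + aa i)%N by ssrlia.
  have Hc2 : (st i.+1 <= st i + j)%N by ssrlia.
  have Hc3 : (st i + j < st i.+1 + aa i.+1)%N by ssrlia.
  have [u [Eu Ru Cu]] := @mkbox_some a b i (st i + j) Hi0 (leq_addr _ _) Hc1.
  have [v [Ev Rv Cv]] := @mkbox_some a b i.+1 (st i + j) Hi Hc2 Hc3.
  rewrite /val_at Eu Ev /=.
  move/forallP: Hs => /(_ u) /forallP /(_ v) /andP [_ Hc].
  move/implyP: Hc; apply; rewrite Ru Rv Cu Cv eqxx /=; ssrlia.
Qed.

Lemma vrf_ssyt Rs : map size Rs = a -> vrf b Rs -> is_ssyt (build Rs).
Proof.
move=> HRs /vrfP [H1 H2].
have Hs : size Rs = size a by rewrite -HRs size_map.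
have Hsz : forall i, (i < size a)%N -> size (nth [::] Rs i) = aa i.
  by move=> i Hi; rewrite -HRs (nth_map [::]) ?Hs.
apply/forallP => u; apply/forallP => v.
have [Hu1 Hu2 Hu3] := box_range u; have [Hv1 Hv2 Hv3] := box_range v.
rewrite !ffunE; apply/andP; split; apply/implyP => /andP [/eqP E1 E2].
- rewrite -E1 in Hv2 Hv3 *.
  rewrite -!ent_nth ?Hsz //; try ssrlia.
  apply: incr_mono; [apply: H1; rewrite Hs // | ssrlia | rewrite Hsz //; ssrlia].
- rewrite -E1 in Hv2 Hv3 *.
  rewrite -!ent_nth ?Hsz //; try ssrlia.
  set i := brow u in Hu1 Hu2 Hu3 E2 *; set k := brow v in Hv1 Hv2 Hv3 E2 *.
  set c := bcol u in Hu2 Hu3 Hv2 Hv3 *.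
  pose F l := ent (nth [::] Rs l) (c - st l)%N.
  have key : forall l, (i <= l)%N -> (l < k)%N -> (F l < F l.+1)%N.
    move=> l Hil Hlk.
    have Hl1 : (l.+1 < size a)%N by ssrlia.
    have Hl0 : (l < size a)%N by ssrlia.
    have S1 := st_mono Hv Hil Hl0.
    have S2 := @end_mono a b Hv l.+1 k Hlk Hv1.
    have Hst := st_step Hv Hl1.
    have Hb1 := vb1 Hv Hl1; have Hb2 := vb2 Hv Hl1.
    have Hl1' : (l.+1 < size Rs)%N by rewrite Hs.
    have := H2 l Hl1'.
    move/allP => /(_ (c - st l)%N); rewrite mem_iota add0n.
    have -> : (0 <= c - st l < bb l)%N by apply/andP; split; ssrlia.
    move=> /(_ isT); rewrite Hsz // /F.
    by have -> : (aa l.+1 - bb l + (c - st l) = c - st l.+1)%N by ssrlia.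
  have chain : forall k', (i < k')%N -> (k' <= k)%N -> (F i < F k')%N.
    elim => [//|k' IH] H1k H2k.
    case: (ltngtP i k') => Hik.
    - apply: ltn_trans (IH Hik (ltnW H2k)) (key _ (ltnW Hik) H2k).
    - ssrlia.
    - by rewrite -Hik; apply: key; rewrite ?Hik.
  exact: chain.
Qed.

Lemma wt_rho (T : {ffun bx -> 'I_N}) : \prod_(u : bx) xv (T u) = wtR xv (rho T).
Proof.
have E1 : wtR xv (rho T) =
  \prod_(i <- iota 0 (size a)) \prod_(c <- iota (st i) (aa i)) xv (val_at T i c).
  rewrite /wtR /rho big_map; apply: eq_bigr => i _; by rewrite /wt big_map.
rewrite E1 -(big_allpairs_dep (h := fun i (c : nat) => (i, c)) (F := fun p => xv (val_at T p.1 p.2))).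
have -> : \prod_(u : bx) xv (T u) =
  \prod_(p <- [seq (brow u, bcol u) | u <- index_enum bx]) xv (val_at T p.1 p.2).
  by rewrite big_map; apply: eq_bigr => u _; rewrite val_atE.
apply: perm_big; apply: uniq_perm.
- rewrite map_inj_uniq ?index_enum_uniq // => u v [F1 F2]; exact: brow_bcol_inj.
- apply: allpairs_uniq_dep => //; first exact: iota_uniq.
    by move=> i _; exact: iota_uniq.
  by move=> [i1 c1] [i2 c2] _ _ /= [-> ->].
move=> p; apply/mapP/allpairsPdep => [[u _ ->]|[i [c [Hi Hc ->]]]].
  have [H1 H2 H3] := box_range u.
  by exists (brow u), (bcol u); rewrite !mem_iota /= add0n H1 H2 H3.
move: Hi Hc; rewrite !mem_iota /= add0n => Hi /andP [Hc1 Hc2].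
have [u [Eu Ru Cu]] := @mkbox_some a b i c Hi Hc1 Hc2.
by exists u; rewrite ?mem_index_enum // Ru Cu.
Qed.

Lemma skew_RS_d : skew_schur xv a b = RS xv a b predT.
Proof.
rewrite RS_flat /skew_schur.
have -> : \sum_(Rs <- rowlists N a | vrf b Rs && (if Rs is r :: _ then predT r else true)) wtR xv Rs
        = \sum_(Rs <- rowlists N a | vrf b Rs) wtR xv Rs.
  by apply: eq_bigl => Rs; case: Rs => [|r Rs]; rewrite andbT.
apply: (big_bij _ _ (h := rho) (h' := build)).
- exact: index_enum_uniq.
- exact: uniq_rowlists.
- move=> T _ Hs; split.
  + by rewrite mem_rowlists map_size_rho.
  + exact: ssyt_vrf.
  + exact: build_rho.
  + by rewrite wt_rho.
- move=> Rs; rewrite mem_rowlists => /eqP HRs Hvr; split.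
  + exact: mem_index_enum.
  + exact: vrf_ssyt.
  + exact: rho_build.
Qed.

End Conv2.

Lemma skew_RS (R : comPzRingType) (N : nat) (xv : 'I_N -> R) a b :
  valid a b -> (0 < head 0%N a)%N -> skew_schur xv a b = RS xv a b predT.
Proof.
case: N xv => [|N'] xv Hv Ha; last exact: (skew_RS_d xv ord0 Hv).
case: a Hv Ha => [//|a0 a'] Hv /= Ha.
have Hc : (nth 0%N (starts (a0 :: a') b) 0 < nth 0%N (starts (a0 :: a') b) 0 + nth 0%N (a0 :: a') 0)%N.
  by rewrite /= -{1}(addn0 (nth _ _ _)) ltn_add2l.
have [u _] := @mkbox_some (a0 :: a') b 0 (nth 0%N (starts (a0 :: a') b) 0) isT (leqnn _) Hc.
rewrite /= big_seq_cond big1; last first.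
  move=> r /andP [Hr _]; move: Hr; rewrite mem_rows.
  by case: r => [|x r]; [move/eqP => E; rewrite -E in Ha | case: x].
by rewrite /skew_schur big1 // => T _; case: (T u).
Qed.

From HB Require Import structures.
From mathcomp Require Import all_boot all_order all_algebra.
From Stdlib Require Import Lia.
Import GRing.Theory.
Local Open Scope ring_scope.
Set Implicit Arguments. Unset Strict Implicit. Unset Printing Implicit Defensive.

Arguments RS : simpl never.
Arguments hh : simpl never.

Lemma valid_split (alpha abar : seq nat) u v beta bb y :
  size abar = size alpha ->
  valid (alpha ++ u :: v :: beta) (abar ++ y :: bb) =
  [&& valid (alpha ++ [:: u]) abar, (y <= minn u v)%N & valid (v :: beta) bb].
Proof.
elim: alpha abar => [|a0 alpha IH] [|c0 abar] //= [Hs].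
rewrite IH //; case: alpha {IH} Hs => [|a1 alpha]; case: abar => [|c1 abar] //= _.
by rewrite ?andbT !andbA.
by rewrite ?andbT !andbA.
Qed.

Lemma valid_cons2 a0 a1 a' b :
  valid [:: a0, a1 & a'] b = (head 0%N b <= minn a0 a1)%N && valid (a1 :: a') (behead b).
Proof. by []. Qed.
Lemma valid1 a0 b : valid [:: a0] b.
Proof. by []. Qed.
Arguments valid : simpl never.

Lemma valid_last_mono (alpha abar : seq nat) u u' :
  valid (alpha ++ [:: u]) abar -> (u <= u')%N -> valid (alpha ++ [:: u']) abar.
Proof.
elim: alpha abar => [|a0 alpha IH] abar //.
case: alpha IH => [|a1 alpha] IH /=; rewrite !valid_cons2 => /andP [H1 H2] Hu;
  apply/andP; split => //.
- move: H1; rewrite !leq_min => /andP [-> H1] /=; exact: leq_trans H1 Hu.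
- exact: IH.
Qed.

Lemma valid_last (alpha abar : seq nat) u :
  size abar = size alpha -> alpha != [::] ->
  valid (alpha ++ [:: u]) abar -> (last 0%N abar <= u)%N.
Proof.
elim: alpha abar => [|a0 alpha IH] [|c0 abar] //= [Hs] _.
case: alpha IH Hs => [|a1 alpha] IH; case: abar => [|c1 abar] //= Hs;
  rewrite valid_cons2 => /andP [H1 H2].
- by move: H1; rewrite leq_min /= => /andP [].
- exact: (IH (c1 :: abar)).
Qed.

Lemma valid_first_mono v v' beta bb :
  valid (v :: beta) bb -> (v <= v')%N -> valid (v' :: beta) bb.
Proof.
case: beta => [|b1 beta] // ; rewrite !valid_cons2 => /andP [H1 H2] Hv.
apply/andP; split => //; move: H1; rewrite !leq_min => /andP [H1 ->].
by rewrite (leq_trans H1 Hv).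
Qed.

Lemma validP a b : reflect (forall i, (i.+1 < size a)%N ->
   (nth 0%N b i <= minn (nth 0%N a i) (nth 0%N a i.+1))%N) (valid a b).
Proof.
elim: a b => [|a0 a' IH] b; first by constructor.
case: a' IH => [|a1 a'] IH; first by constructor => i.
rewrite valid_cons2; apply: (iffP andP) => [[H1 /IH H2] [|i] Hi|H].
- by move: H1; case: b {H2} => [|b0 b].
- by have := H2 i Hi; case: b {H1 H2}.
split; first by have := H 0%N isT; case: b {H}.
apply/IH => i Hi; have := H i.+1 Hi; by case: b {H} => [|b0 b] /=; rewrite ?nth_nil.
Qed.

Section Alg.
Variable R : comPzRingType.
Lemma sub2 (a b c : R) : a - b - (a - c) = - (b - c).
Proof. by rewrite !opprB addrC addrA subrK. Qed.

Lemma Id2 (S h M Q W : R) : (S * h - 1 * M) * Q - h * (S * Q - 1 * W) = - (M * Q - h * W).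
Proof.
rewrite !mul1r mulrBl mulrBr.
have -> : S * h * Q = h * (S * Q) by rewrite mulrAC mulrC.
exact: sub2.
Qed.

Lemma Id3 (P h T V Y : R) : P * (h * T - 1 * V) - h * (P * T - 1 * Y) = - (P * V - h * Y).
Proof.
rewrite !mul1r !mulrBr mulrCA; exact: sub2.
Qed.

Lemma Id4 (S h M T V Y : R) :
  (S * h - 1 * M) * (h * T - 1 * V) - h * (S * (h * T - 1 * V) - 1 * (M * T - 1 * Y))
  = M * V - h * Y.
Proof.
rewrite !mul1r; set X := h * T - V.
rewrite mulrBl [h * (_ - _)]mulrBr.
have -> : h * (S * X) = S * h * X by rewrite mulrA [h * S]mulrC.
rewrite sub2 /X mulrBr mulrBr mulrCA sub2 opprK //.
Qed.
End Alg.

Lemma st_valid_sg sg ta sgb tab : standing_hyp sg ta sgb tab -> valid (sg ++ [:: 1%N]) sgb.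
Proof.
case=> Hp1 Hp2 Hs1 Hs2 [Hl Hh H3 H4].
apply/validP => i; rewrite size_cat /= addn1 ltnS => Hi.
rewrite nth_cat Hi nth_cat; case: (ltnP i.+1 (size sg)) => Hi1; first exact: H3.
have Ei : i = (size sgb).-1 by rewrite Hs1; ssrlia.
have -> : (i.+1 - size sg = 0)%N by ssrlia.
have -> : nth 0%N sgb i = last 0%N sgb by rewrite Ei nth_last.
rewrite /= Hl; last ssrlia.
rewrite leq_min leqnn andbT.
by have := allP Hp1 _ (mem_nth 0%N Hi).
Qed.

Lemma st_valid_ta sg ta sgb tab : standing_hyp sg ta sgb tab -> valid (1%N :: ta) tab.
Proof.
case=> Hp1 Hp2 Hs1 Hs2 [Hl Hh H3 H4].
apply/validP => i; rewrite /= ltnS => Hi.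
case: i Hi => [|i] Hi /=.
  rewrite nth0 Hh // leq_min leqnn /=.
  by have := allP Hp2 _ (mem_nth 0%N Hi).
by rewrite minnC; apply: H4; rewrite Hi.
Qed.

Lemma sg_last sg ta sgb tab : standing_hyp sg ta sgb tab -> (0 < size sg)%N ->
  exists sg' ss sgb', [/\ sg = sg' ++ [:: ss], sgb = sgb' ++ [:: 1%N], size sgb' = size sg',
     (0 < ss)%N & valid (sg' ++ [:: ss]) sgb'].
Proof.
move=> Hst Hs; have V := st_valid_sg Hst.
case: Hst => Hp1 Hp2 Hs1 Hs2 [Hl Hh _ _].
case/lastP: sg Hs Hp1 Hs1 Hl V => [//|sg' ss] _ Hp1 Hs1 Hl V.
case/lastP: sgb Hs1 Hl V => [|sgb' c]; first by rewrite size_rcons.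
rewrite !size_rcons last_rcons => [[Hs1]] Hl; rewrite Hl // !cats1.
rewrite -!cats1 -catA /= valid_split // => /and3P [V _ _].
exists sg', ss, sgb'; split => //.
by move: Hp1; rewrite all_rcons => /andP [].
Qed.

Lemma ta_first sg ta sgb tab : standing_hyp sg ta sgb tab -> (0 < size ta)%N ->
  exists t1 ta' tab', [/\ ta = t1 :: ta', tab = 1%N :: tab', size tab' = size ta',
     (0 < t1)%N & valid (t1 :: ta') tab'].
Proof.
move=> Hst Hs; have V := st_valid_ta Hst.
case: Hst => Hp1 Hp2 Hs1 Hs2 [Hl Hh _ _].
case: ta Hs Hp2 Hs2 Hh V => [//|t1 ta'] _ Hp2 Hs2 Hh V.
case: tab Hs2 Hh V => [//|c tab'] [Hs2] Hh; rewrite /= in Hh; rewrite Hh //.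
rewrite valid_cons2 => /andP [_ V].
exists t1, ta', tab'; split => //.
by move: Hp2 => /andP [].
Qed.

Section Final.
Variables (R : comPzRingType) (N : nat) (xv : 'I_N -> R).

Definition Pf sg sgb m := RS xv (sg ++ [:: m]) sgb predT.
Definition Qf ta tab n := RS xv (n :: ta) tab predT.
Definition Zf sg ta sgb tab L := RS xv (sg ++ L :: ta) (sgb ++ tab) predT.
Definition hx x := if x is x'.+1 then hh xv x' else 0.

Lemma hh0 : hh xv 0 = 1.
Proof.
rewrite /hh RS_cons.
have E : perm_eq (rows N 0) [:: [::]].
  apply: uniq_perm; [exact: uniq_rows | by [] | move=> r].
  by rewrite mem_rows mem_seq1 size_eq0.
by rewrite (perm_big _ E) big_cons big_nil /= mulr1 addr0 /wt big_nil.
Qed.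

Lemma head_pos (sg : seq nat) u rest : all (fun k => 0 < k)%N sg -> (0 < u)%N ->
  (0 < head 0%N (sg ++ u :: rest))%N.
Proof. by case: sg => [|s0 sg] //= /andP []. Qed.

Lemma K1 sg ta sgb tab m n x : standing_hyp sg ta sgb tab ->
  (0 < m)%N -> (0 < n)%N -> (x <= m)%N -> (x <= n)%N ->
  skew_schur xv (sg ++ [:: m, n & ta]) (sgb ++ x :: tab) =
  Pf sg sgb m * Qf ta tab n - hx x * Zf sg ta sgb tab (m + n - x).+1.
Proof.
move=> Hst Hm Hn Hxm Hxn.
have Vsg := st_valid_sg Hst; have Vta := st_valid_ta Hst.
have [Hp1 Hp2 Hs1 Hs2 [Hl Hh _ _]] := Hst.
rewrite skew_RS; last exact: head_pos; last first.
  rewrite valid_split // (valid_last_mono Vsg Hm) (valid_first_mono Vta Hn) andbT /=.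
  by rewrite leq_min Hxm Hxn.
case: x Hxm Hxn => [|x] Hxm Hxn.
  by rewrite Fact_T // /hx mul0r subr0.
rewrite (@JT_T _ _ xv sg sgb m n x.+1 ta tab) //.
- move=> Hta; rewrite Hh; last by rewrite lt0n size_eq0.
  by [].
- move=> Hsg; rewrite Hl; last by rewrite lt0n size_eq0.
  by [].
Qed.

Lemma K2 sg' ss sgb' ta tab m n : all (fun k => 0 < k)%N sg' ->
  size sgb' = size sg' -> (0 < ss)%N -> valid (sg' ++ [:: ss]) sgb' ->
  valid (1%N :: ta) tab -> ((0 < size ta)%N -> head 0%N tab = 1%N) ->
  (0 < m)%N -> (m.+1 <= n)%N ->
  - skew_schur xv (sg' ++ [:: (m + ss)%N, n & ta]) (sgb' ++ m.+1 :: tab) =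
  Pf (sg' ++ [:: ss]) (sgb' ++ [:: 1%N]) m * Qf ta tab n
  - hh xv m * Zf (sg' ++ [:: ss]) ta (sgb' ++ [:: 1%N]) tab n.
Proof.
move=> Hp Hs Hss V Vta Hh Hm Hmn.
have Hn : (0 < n)%N by ssrlia.
rewrite skew_RS; last by apply: head_pos => //; ssrlia.
  rewrite (@JT_T _ _ xv sg' sgb' (m + ss) n m.+1 ta tab) //; try ssrlia.
  - rewrite /Pf /Zf -!catA /=.
    rewrite (@JT_T _ _ xv sg' sgb' ss m 1 [::] [::]) //; try ssrlia.
    rewrite (@JT_T _ _ xv sg' sgb' ss n 1 ta tab) //; try ssrlia.
    + rewrite !hh0 cats0 /=.
      have -> : (ss + m - 1).+1 = (m + ss)%N by ssrlia.
      have -> : (ss + n - 1).+1 = (m + ss + n - m.+1).+1 by ssrlia.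
      by rewrite Id2.
    + move=> Hta; rewrite Hh; last by rewrite lt0n size_eq0.
      by [].
    + move=> Hsg; apply: leq_trans (valid_last Hs Hsg V) _; ssrlia.
    + move=> Hsg; apply: leq_trans (valid_last Hs Hsg V) _; ssrlia.
  - move=> Hta; rewrite Hh; last by rewrite lt0n size_eq0.
    by [].
  - move=> Hsg; apply: leq_trans (valid_last Hs Hsg V) _; ssrlia.
rewrite valid_split //; apply/and3P; split.
- apply: valid_last_mono V _; ssrlia.
- rewrite leq_min; apply/andP; split => //; ssrlia.
- exact: valid_first_mono Vta Hn.
Qed.

Ltac side Hl Hh := let H := fresh "H" in move=> H;
  first [apply: leq_trans (Hl H) _; ssrlia | apply: leq_trans (Hh H) _; ssrlia].

Lemma valid_head v beta bb : valid (v :: beta) bb -> beta != [::] -> (head 0%N bb <= v)%N.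
Proof.
case: beta => [//|b1 beta]; rewrite valid_cons2 leq_min => /andP [/andP [H _] _] _ //.
Qed.

Lemma K3 sg sgb t1 ta' tab' m n : all (fun k => 0 < k)%N sg ->
  size sgb = size sg -> valid (sg ++ [:: 1%N]) sgb ->
  ((0 < size sg)%N -> last 0%N sgb = 1%N) ->
  (0 < t1)%N -> valid (t1 :: ta') tab' ->
  (0 < n)%N -> (n.+1 <= m)%N ->
  - skew_schur xv (sg ++ [:: m, (n + t1)%N & ta']) (sgb ++ n.+1 :: tab') =
  Pf sg sgb m * Qf (t1 :: ta') (1%N :: tab') n - hh xv n * Zf sg (t1 :: ta') sgb (1%N :: tab') m.
Proof.
move=> Hp Hs Vsg Hl Ht V Hn Hnm.
have Hm : (0 < m)%N by ssrlia.
have Hlast : sg != [::] -> (last 0%N sgb <= 1)%N.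
  by move=> Hsg; rewrite Hl // lt0n size_eq0.
have Hhd : ta' != [::] -> (head 0%N tab' <= t1)%N by apply: valid_head.
rewrite skew_RS; last by apply: head_pos.
  rewrite (@JT_T _ _ xv sg sgb m (n + t1) n.+1 ta' tab') //; try ssrlia; try side Hlast Hhd.
  - rewrite /Qf /Zf.
    rewrite (@JT_T _ _ xv [::] [::] n t1 1 ta' tab') //; try ssrlia; try side Hlast Hhd.
    rewrite (@JT_T _ _ xv sg sgb m t1 1 ta' tab') //; try ssrlia; try side Hlast Hhd.
    + rewrite !hh0 /= /Pf.
      have -> : RS xv [:: n] [::] predT = hh xv n by [].
      have -> : (n + t1 - 1).+1 = (n + t1)%N by ssrlia.
      have -> : (m + t1 - 1).+1 = (m + (n + t1) - n.+1).+1 by ssrlia.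
      by rewrite Id3.
rewrite valid_split //; apply/and3P; split.
- apply: valid_last_mono Vsg _; ssrlia.
- rewrite leq_min; apply/andP; split => //; ssrlia.
- apply: valid_first_mono V _; ssrlia.
Qed.

Lemma K4 sg' ss sgb' t1 ta' tab' m : all (fun k => 0 < k)%N sg' ->
  size sgb' = size sg' -> (0 < ss)%N -> valid (sg' ++ [:: ss]) sgb' ->
  (0 < t1)%N -> valid (t1 :: ta') tab' -> (0 < m)%N ->
  skew_schur xv (sg' ++ [:: (m + ss)%N, (m + t1)%N & ta']) (sgb' ++ m.+1 :: tab') =
  Pf (sg' ++ [:: ss]) (sgb' ++ [:: 1%N]) m * Qf (t1 :: ta') (1%N :: tab') m
  - hh xv m * Zf (sg' ++ [:: ss]) (t1 :: ta') (sgb' ++ [:: 1%N]) (1%N :: tab') m.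
Proof.
move=> Hp Hs Hss V Ht Vt Hm.
have Hlast : sg' != [::] -> (last 0%N sgb' <= ss)%N.
  by move=> Hsg; apply: valid_last Hs Hsg V.
have Hhd : ta' != [::] -> (head 0%N tab' <= t1)%N by apply: valid_head.
rewrite skew_RS; last by apply: head_pos => //; ssrlia.
  rewrite (@JT_T _ _ xv sg' sgb' (m + ss) (m + t1) m.+1 ta' tab') //; try ssrlia; try side Hlast Hhd.
  - rewrite /Pf /Qf /Zf -!catA /=.
    rewrite (@JT_T _ _ xv sg' sgb' ss m 1 [:: t1 & ta'] [:: 1%N & tab']) //; try ssrlia; try side Hlast Hhd.
    rewrite (@JT_T _ _ xv [::] [::] m t1 1 ta' tab') //; try ssrlia; try side Hlast Hhd.
    rewrite (@JT_T _ _ xv sg' sgb' ss m 1 [::] [::]) //; try ssrlia; try side Hlast Hhd.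
    rewrite (@JT_T _ _ xv sg' sgb' (ss + m - 1).+1 t1 1 ta' tab') //; try ssrlia; try side Hlast Hhd.
    + rewrite !hh0 /= cats0.
      have -> : RS xv [:: m] [::] predT = hh xv m by [].
      have -> : (ss + m - 1).+1 = (m + ss)%N by ssrlia.
      have -> : (m + t1 - 1).+1 = (m + t1)%N by ssrlia.
      have -> : (m + ss + t1 - 1).+1 = (m + ss + (m + t1) - m.+1).+1 by ssrlia.
      by rewrite Id4.
rewrite valid_split //; apply/and3P; split.
- apply: valid_last_mono V _; ssrlia.
- rewrite leq_min; apply/andP; split => //; ssrlia.
- apply: valid_first_mono Vt _; ssrlia.
Qed.

Lemma take_init (s : seq nat) a : take (size (s ++ [:: a])).-1 (s ++ [:: a]) = s.
Proof. by rewrite size_cat addn1 /= take_size_cat. Qed.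

Lemma take_init2 (s : seq nat) a (t : seq nat) b : size t = size s ->
  take (size (s ++ [:: a])).-1 (t ++ [:: b]) = t.
Proof. by move=> H; rewrite size_cat addn1 /= -H take_size_cat. Qed.

Lemma Kclosed sg ta sgb tab m n x : standing_hyp sg ta sgb tab ->
  (0 < m)%N -> (0 < n)%N -> (x <= (minn m n).+1)%N ->
  Kfun xv sg ta sgb tab m n x = Pf sg sgb m * Qf ta tab n - hx x * Zf sg ta sgb tab (m + n - x).+1.
Proof.
move=> Hst Hm Hn Hx.
have Hx1 : (x <= m.+1)%N by apply: leq_trans Hx _; rewrite ltnS geq_minl.
have Hx2 : (x <= n.+1)%N by apply: leq_trans Hx _; rewrite ltnS geq_minr.
have [Hp1 Hp2 Hs1 Hs2 [Hl Hh _ _]] := Hst.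
rewrite /Kfun /=.
case: ifP => [/andP [Hxm Hxn] | C1]; first exact: K1.
case: ifP => [/andP [/eqP Ex Hxn] | C2].
  subst x; rewrite /hx.
  have -> : (m + n - m.+1).+1 = n by ssrlia.
  case: eqP => Hs0.
    have E : sg = [::] by apply/size0nil.
    have E' : sgb = [::] by apply/size0nil; rewrite Hs1.
    subst sg sgb; rewrite /Pf /Zf /=.
    have -> : RS xv [:: m] [::] predT = hh xv m by [].
    by rewrite subrr.
  have [sg' [ss [sgb' [E1 E2 Hs' Hss V]]]] : exists sg' ss sgb', [/\ sg = sg' ++ [:: ss],
     sgb = sgb' ++ [:: 1%N], size sgb' = size sg', (0 < ss)%N & valid (sg' ++ [:: ss]) sgb'].
    by apply: sg_last Hst _; rewrite lt0n; apply/eqP.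
  subst sg sgb.
  rewrite take_init (take_init2 _ _ Hs') last_cat /=.
  apply: K2 => //.
  - by move: Hp1; rewrite all_cat => /andP [].
  - exact: st_valid_ta Hst.
case: ifP => [/andP [Hxm /eqP Ex] | C3].
  subst x; rewrite /hx.
  have -> : (m + n - n.+1).+1 = m by ssrlia.
  case: eqP => Ht0.
    have E : ta = [::] by apply/size0nil.
    have E' : tab = [::] by apply/size0nil; rewrite Hs2.
    subst ta tab; rewrite /Qf /Zf /Pf /= cats0.
    have -> : RS xv [:: n] [::] predT = hh xv n by [].
    by rewrite mulrC subrr.
  have [t1 [ta' [tab' [E1 E2 Hs' Ht V]]]] : exists t1 ta' tab', [/\ ta = t1 :: ta',
     tab = 1%N :: tab', size tab' = size ta', (0 < t1)%N & valid (t1 :: ta') tab'].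
    by apply: ta_first Hst _; rewrite lt0n; apply/eqP.
  subst ta tab; rewrite /=.
  apply: K3 => //.
  - exact: st_valid_sg Hst.
case: ifP => [/andP [/eqP Ex /eqP Ex'] | C4].
  subst x; have E : n = m by ssrlia.
  subst n; rewrite /hx.
  have -> : (m + m - m.+1).+1 = m by ssrlia.
  case: ifP => [/orP [/eqP Hs0|/eqP Ht0] | /norP [/eqP Hs0 /eqP Ht0]].
  - have E : sg = [::] by apply/size0nil.
    have E' : sgb = [::] by apply/size0nil; rewrite Hs1.
    subst sg sgb; rewrite /Pf /Zf /Qf /=.
    have -> : RS xv [:: m] [::] predT = hh xv m by [].
    by rewrite subrr.
  - have E : ta = [::] by apply/size0nil.
    have E' : tab = [::] by apply/size0nil; rewrite Hs2.
    subst ta tab; rewrite /Qf /Zf /Pf /= cats0.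
    have -> : RS xv [:: m] [::] predT = hh xv m by [].
    by rewrite mulrC subrr.
  have [sg' [ss [sgb' [E1 E2 Hs' Hss V]]]] : exists sg' ss sgb', [/\ sg = sg' ++ [:: ss],
     sgb = sgb' ++ [:: 1%N], size sgb' = size sg', (0 < ss)%N & valid (sg' ++ [:: ss]) sgb'].
    by apply: sg_last Hst _; rewrite lt0n; apply/eqP.
  have [t1 [ta' [tab' [E3 E4 Ht' Ht V']]]] : exists t1 ta' tab', [/\ ta = t1 :: ta',
     tab = 1%N :: tab', size tab' = size ta', (0 < t1)%N & valid (t1 :: ta') tab'].
    by apply: ta_first Hst _; rewrite lt0n; apply/eqP.
  subst sg sgb ta tab.
  rewrite take_init (take_init2 _ _ Hs') last_cat /=.
  apply: K4 => //.
  by move: Hp1; rewrite all_cat => /andP [].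
exfalso.
have [Hxm|Hxm] := leqP x m; have [Hxn|Hxn] := leqP x n.
- by rewrite Hxm Hxn in C1.
- have Ex : x = n.+1 by ssrlia.
  by rewrite Hxm Ex eqxx in C3.
- have Ex : x = m.+1 by ssrlia.
  by rewrite Hxn Ex eqxx in C2.
- have Ex : x = m.+1 by ssrlia.
  have Ex' : x = n.+1 by ssrlia.
  by move: C4; rewrite {1}Ex {1}Ex' !eqxx.
Qed.

Lemma subBB2 (a b c : R) : (a - c) - (b - c) = a - b.
Proof. by rewrite opprB addrA subrK. Qed.

End Final.

Theorem lemma2p3 (R : comPzRingType) (N : nat) (xv : 'I_N -> R)
    (sg ta sgb tab : seq nat) (m n m' n' x x' : nat) :
  standing_hyp sg ta sgb tab ->
  (0 < m)%N -> (0 < n)%N -> (0 < m')%N -> (0 < n')%N ->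
  (m + n = m' + n')%N ->
  (x <= minn (minn m n) (minn m' n') + 1)%N ->
  (x' <= minn (minn m n) (minn m' n') + 1)%N ->
  Kfun xv sg ta sgb tab m n x - Kfun xv sg ta sgb tab m' n' x =
  Kfun xv sg ta sgb tab m n x' - Kfun xv sg ta sgb tab m' n' x'.
Proof.
move=> Hst Hm Hn Hm' Hn' Hmn Hx Hx'.
rewrite addn1 in Hx Hx'.
have L1 : forall y, (y <= (minn (minn m n) (minn m' n')).+1)%N -> (y <= (minn m n).+1)%N.
  by move=> y Hy; apply: leq_trans Hy _; rewrite ltnS geq_minl.
have L2 : forall y, (y <= (minn (minn m n) (minn m' n')).+1)%N -> (y <= (minn m' n').+1)%N.
  by move=> y Hy; apply: leq_trans Hy _; rewrite ltnS geq_minr.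
rewrite !Kclosed //; try (apply: L1 => //); try (apply: L2 => //).
by rewrite Hmn !subBB2.
Qed.
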